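(* Let $R$ be a semistandard cylindric tableau and $S$ a set of boxes satisfying the input conditions of full multi-insertion, and perform $\operatorname{FullMulti}(R,S)$. Then for every row $r$, the list of entries inserted into row $r$ during the one-step phases (placed into a box of row $r$, whether by landing or by bumping), in the order in which they were inserted, is weakly increasing.
   Context: Fix integers $n>k\ge1$. A cylindric partition is a weakly decreasing integer sequence $(\lambda_m)_{m\in\mathbb Z}$ with $\lambda_m=\lambda_{m+k}+n-k$. A point $(x,y)\in\mathbb Z^2$ lies in $\lambda$ if $y\le\lambda_x$. Boxes are classes of points modulo translation by multiples of $(-k,n-k)$; row $x$ of the cylinder is the image of plane row $x$ (indexed mod $k$), column $y$ the image of plane column $y$; within a row boxes are ordered left to right by $y$-coordinates of representatives in a fixed plane row. $\mu\subseteq\lambda$ means $\mu_m\le\lambda_m$ for all $m$. A (semistandard cylindric) tableau of shape $\lambda/\mu$ is a map from the boxes in $\lambda$ but not $\mu$ to a totally ordered alphabet, weakly increasing along plane rows and strictly increasing down plane columns; its shapes are part of its data. Full multi-insertion $\operatorname{FullMulti}(R,S)$: input a tableau $R$ with outer shape $\lambda$, inner shape $\mu$, and a set $S$ of boxes not in $\mu$, no two in the same column, such that $\mu$ plus $S$ is a cylindric partition. Choose an integer $r_0$. For $h=r_0,\dots,r_0+k-1$, go through the boxes of $S$ in row $h$ from left to right: if the box is in $\lambda$, remove its entry $x$ and append $(x,h+1)$ to a queue; otherwise add the box to $\lambda$. All boxes of $S$ are added to the inner shape. Then, while the current queue $q$ is nonempty: start an empty queue $q'$; remove pairs $(x,s)$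 from the front of $q$ one at a time; if $x$ is $\ge$ every entry in row $s$, put $x$ into the leftmost box of row $s$ not in the current outer shape and add it to the outer shape (a landing); otherwise replace the leftmost entry $x'$ of row $s$ greater than $x$ by $x$ (a bump) and append $(x',s+1)$ to $q'$; when $q$ is exhausted set $q:=q'$. All actions are performed one at a time, giving a time order. *)

(* Defs.v *)
From HB Require Import structures.
From mathcomp Require Import all_boot all_order all_algebra.
Set Implicit Arguments. Unset Strict Implicit. Unset Printing Implicit Defensive.
Import Order.TTheory GRing.Theory Num.Theory.
Local Open Scope ring_scope.

(* A point (x,y) lies in a partition lam : int -> int iff y <= lam x.
   Boxes = classes of points modulo translation by multiples of (-k, n-k);
   each box has a unique canonical representative (r, y) with 0 <= r < k,
   computed by [canon]. *)

Definition canon (n k : nat) (x y : int) : int * int :=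
  ((x %% k%:Z)%Z, y + (x %/ k%:Z)%Z * (n%:Z - k%:Z)).

Definition isBox (k : nat) (b : int * int) : Prop := 0 <= b.1 < k%:Z.

Definition cylindric (n k : nat) (lam : int -> int) : Prop :=
  (forall m, lam (m + 1) <= lam m) /\
  (forall m, lam m = lam (m + k%:Z) + (n%:Z - k%:Z)).

Definition subpart (mu lam : int -> int) : Prop := forall m, mu m <= lam m.

Definition inSkew (lam mu : int -> int) (b : int * int) : Prop :=
  mu b.1 < b.2 <= lam b.1.

Definition sameColumn (n k : nat) (b1 b2 : int * int) : Prop :=
  exists x1 x2 y : int, canon n k x1 y = b1 /\ canon n k x2 y = b2.

Definition semistandard (n k : nat) d (T : orderType d)
  (lam mu : int -> int) (f : int -> int -> T) : Prop :=
  let ent x y := f (canon n k x y).1 (canon n k x y).2 in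
  let inP x y := mu x < y <= lam x in
  (forall x y, inP x y -> inP x (y + 1) -> (ent x y <= ent x (y + 1))%O) /\
  (forall x y, inP x y -> inP (x + 1) y -> (ent x y < ent (x + 1) y)%O).

Definition rowys (lam mu : int -> int) (r : int) : seq int :=
  if mu r < lam r then [seq mu r + (i.+1)%:Z | i <- iota 0 `|lam r - mu r|%N]
  else [::].

Record fmstate d (T : orderType d) := FMState {
  st_lam : int -> int;
  st_mu : int -> int;
  st_f : int -> int -> T;         (* entries on canonical reps *)
  st_q : seq (T * int);
  st_q2 : seq (T * int);
  st_log : seq (int * T)          (* (row mod k, entry) of every insertion, in time order *)
}.

Definition updf d (T : orderType d) (f : int -> int -> T) (r y : int) (x : T) :=
  fun a b => if (a == r) && (b == y) then x else f a b.

Definition addrow (k : nat) (lam : int -> int) (r : int) : int -> int :=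
  fun m => if (m %% k%:Z)%Z == r then lam m + 1 else lam m.

(* One action of the while loop (or the queue switch q := q'). *)
Definition fmstep (k : nat) d (T : orderType d) (s : fmstate T) : fmstate T :=
  let: FMState lam mu f q q2 lg := s in
  match q with
  | [::] => match q2 with
            | [::] => s
            | _ => FMState lam mu f q2 [::] lg
            end
  | (x, sr) :: q1 =>
      let r := (sr %% k%:Z)%Z in
      let ys := rowys lam mu r in
      if all (fun y => (f r y <= x)%O) ys then
        FMState (addrow k lam r) mu (updf f r (lam r + 1) x) q1 q2
                (rcons lg (r, x))
      else
        let y0 := nth 0 ys (find (fun y => (x < f r y)%O) ys) in
        FMState lam mu (updf f r y0 x) q1 (rcons q2 (f r y0, sr + 1))
                (rcons lg (r, x))
  end.

(* Initial phase of FullMulti(R,S) with S = nu/mu, started at row r0. *)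
Definition fminit (k : nat) d (T : orderType d) (lam mu nu : int -> int)
  (f : int -> int -> T) (r0 : int) : fmstate T :=
  let hs := [seq r0 + i%:Z | i <- iota 0 k] in
  let q := flatten [seq [seq (f (h %% k%:Z)%Z y, h + 1)
                        | y <- rowys (fun m => Num.min (lam m) (nu m)) mu (h %% k%:Z)%Z]
                   | h <- hs] in
  FMState (fun m => Num.max (lam m) (nu m)) nu f q [::] [::].

Definition insertedRow (k : nat) d (T : orderType d) (lam mu nu : int -> int)
  (f : int -> int -> T) (r0 : int) (N : nat) (r : int) : seq T :=
  [seq p.2 | p <- st_log (iter N (@fmstep k d T) (@fminit k d T lam mu nu f r0))
           & p.1 == (r %% k%:Z)%Z].

(* Main.v *)
Require Import Defs.
From HB Require Import structures.
From mathcomp Require Import all_boot all_order all_algebra.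
From mathcomp Require Import zify.
Import Order.TTheory GRing.Theory Num.Theory.
Local Open Scope ring_scope.

Lemma modS_inj (k : nat) (a b : int) :
  ((a + 1) %% k%:Z)%Z = ((b + 1) %% k%:Z)%Z -> (a %% k%:Z)%Z = (b %% k%:Z)%Z.
Proof.
move=> H; have : ((a + 1) == (b + 1) %[mod k%:Z])%Z by rewrite H.
by rewrite eqz_modDr => /eqP.
Qed.

Lemma modz_range (k : nat) (a : int) : (0 < k)%N -> 0 <= (a %% k%:Z)%Z < k%:Z.
Proof.
move=> hk; rewrite modz_ge0 ?ltz_pmod //; lia.
Qed.

Lemma modz_id (k : nat) (a : int) : 0 <= a < k%:Z -> (a %% k%:Z)%Z = a.
Proof. exact: modz_small. Qed.

Lemma modzS_mod (k : nat) (a : int) :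
  (((a %% k%:Z)%Z + 1) %% k%:Z)%Z = ((a + 1) %% k%:Z)%Z.
Proof. exact: modzDml. Qed.

Lemma mod_shift_inj (k i j : nat) (r0 : int) : (i < k)%N -> (j < k)%N ->
  ((r0 + i%:Z + 1) %% k%:Z)%Z = ((r0 + j%:Z + 1) %% k%:Z)%Z -> i = j.
Proof.
move=> hi hj H.
have {}H := modS_inj _ _ _ H.
have : ((r0 + i%:Z) == (r0 + j%:Z) %[mod k%:Z])%Z by rewrite H.
rewrite eqz_modDl => /eqP; rewrite !modz_small; lia.

Qed.

Lemma mem_rowys (lam mu : int -> int) r y :
  (y \in rowys lam mu r) = (mu r < y <= lam r).
Proof.
rewrite /rowys; case: ifP => H.
  apply/mapP/idP.
    case=> i; rewrite mem_iota => /andP[_ hi] ->; lia.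
  move=> hy; exists `|(y - mu r - 1)%R|%N; first by rewrite mem_iota; lia.
  lia.
by rewrite in_nil; lia.
Qed.
Definition pendv (k : nat) {d} {T : orderType d} (q : seq (T * int)) (t : int) : seq T :=
  [seq p.1 | p <- q & ((p.2 %% k%:Z)%Z == t)].
Definition logv {d} {T : orderType d} (lg : seq (int * T)) (t : int) : seq T :=
  [seq p.2 | p <- lg & p.1 == t].
Definition hist (k : nat) {d} {T : orderType d} (s : fmstate T) (t : int) : seq T :=
  logv (st_log s) t ++ pendv k (st_q s ++ st_q2 s) t.

Lemma pendv_cat k {d} {T : orderType d} (a b : seq (T * int)) t :
  pendv k (a ++ b) t = pendv k a t ++ pendv k b t.
Proof. by rewrite /pendv filter_cat map_cat. Qed.

Lemma pendv_cons k {d} {T : orderType d} x sr (a : seq (T * int)) t :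
  pendv k ((x, sr) :: a) t =
  (if (sr %% k%:Z)%Z == t then x :: pendv k a t else pendv k a t).
Proof. by rewrite /pendv /=; case: ifP. Qed.

Lemma pendv_nil k {d} {T : orderType d} t : pendv k ([::] : seq (T * int)) t = [::].
Proof. by []. Qed.

Lemma logv_rcons {d} {T : orderType d} (lg : seq (int * T)) r x t :
  logv (rcons lg (r, x)) t = logv lg t ++ (if r == t then [:: x] else [::]).
Proof.
by rewrite /logv filter_rcons; case: ifP => _; rewrite ?map_rcons ?cats1 ?cats0.
Qed.

Definition Inv (k : nat) {d} {T : orderType d} (s : fmstate T) : Prop :=
  forall t, 0 <= t < k%:Z ->
  [/\ pairwise (<=%O) (hist k s t),
      (forall y y', st_mu s t < y -> y <= y' -> y' <= st_lam s t ->
          (st_f s t y <= st_f s t y')%O) &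
      exists P,
        (forall y, st_mu s t < y <= P ->
           exists2 v, v \in logv (st_log s) t & (st_f s t y <= v)%O) /\
        (forall y, P < y <= st_lam s t -> forall v,
           v \in hist k s ((t + 1) %% k%:Z)%Z -> (v <= st_f s t y)%O)].

Lemma updf_neq {d} {T : orderType d} (f : int -> int -> T) r y0 x t y :
  t != r -> updf f r y0 x t y = f t y.
Proof. by rewrite /updf => /negbTE ->. Qed.

Lemma updf_eq {d} {T : orderType d} (f : int -> int -> T) r y0 x y :
  updf f r y0 x r y = if y == y0 then x else f r y.
Proof. by rewrite /updf eqxx. Qed.

Lemma addrow_neq k (lam : int -> int) r t :
  0 <= t < k%:Z -> t != r -> addrow k lam r t = lam t.
Proof. by move=> ht htr; rewrite /addrow modz_id // (negbTE htr). Qed.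

Lemma addrow_eq k (lam : int -> int) r :
  0 <= r < k%:Z -> addrow k lam r r = lam r + 1.
Proof. by move=> hr; rewrite /addrow modz_id // eqxx. Qed.

Lemma mem_logv_rcons {d} {T : orderType d} (lg : seq (int * T)) p v t :
  v \in logv lg t -> v \in logv (rcons lg p) t.
Proof. by case: p => a b; rewrite logv_rcons mem_cat => ->. Qed.

Lemma step_nil k {d} {T : orderType d} lam mu (f : int -> int -> T) q2 lg :
  Inv k (FMState lam mu f [::] q2 lg) -> Inv k (fmstep k (FMState lam mu f [::] q2 lg)).
Proof.
case: q2 => [|a q2'] IH //.
move=> t ht; have := IH t ht.
by rewrite /hist /= cats0.
Qed.

Lemma size_rowys (lam mu : int -> int) r :
  size (rowys lam mu r) = if mu r < lam r then `|lam r - mu r|%N else 0%N.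
Proof. by rewrite /rowys; case: ifP => //; rewrite size_map size_iota. Qed.

Lemma nth_rowys (lam mu : int -> int) r i :
  (i < size (rowys lam mu r))%N -> nth 0 (rowys lam mu r) i = mu r + (i.+1)%:Z.
Proof.
rewrite /rowys; case: ifP => // _.
by rewrite size_map size_iota => hi; rewrite (nth_map 0%N) ?size_iota // nth_iota.
Qed.

Lemma step_cons k {d} {T : orderType d} lam mu (f : int -> int -> T) x sr q1 q2 lg :
  (0 < k)%N ->
  Inv k (FMState lam mu f ((x, sr) :: q1) q2 lg) ->
  Inv k (fmstep k (FMState lam mu f ((x, sr) :: q1) q2 lg)).
Proof.
move=> hk IH.
rewrite /fmstep.
set r := (sr %% k%:Z)%Z.
have hr : 0 <= r < k%:Z by exact: modz_range.
have [Cr Er [Pr [Br Dr]]] := IH r hr.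
rewrite /= in Er Br Dr.
move: Cr; rewrite /hist /= pendv_cons -/r eqxx pairwise_cat pairwise_cons.
move=> /and3P[/allrelP Hlx _ /andP[/allP Hxp _]].
have Hlogx : forall v, v \in logv lg r -> (v <= x)%O.
  by move=> v hv; apply: Hlx => //; rewrite mem_head.
have Hxp' : forall v, v \in pendv k (q1 ++ q2) r -> (x <= v)%O by move=> v /Hxp.
case: ifP => Hall.
-
  have Hh : forall t, hist k (FMState (addrow k lam r) mu (updf f r (lam r + 1) x) q1 q2
                        (rcons lg (r, x))) t = hist k (FMState lam mu f ((x, sr) :: q1) q2 lg) t.
    move=> t; rewrite /hist /= logv_rcons pendv_cons -/r.
    by case: (r == t); rewrite ?cats0 // -catA.
  have Hle : forall y, mu r < y <= lam r + 1 -> (updf f r (lam r + 1) x r y <= x)%O.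
    move=> y hy; rewrite updf_eq; case: eqP => // hne.
    by apply: (allP Hall); rewrite mem_rowys; lia.
  move=> t ht; have [Ct Et [Pt [Bt Dt]]] := IH t ht.
  rewrite /= in Et Bt Dt *.
  split; first by rewrite Hh.
  + move=> y y' /=; case: (eqVneq t r) => [->|htr].
      rewrite addrow_eq // => h1 h2 h3.
      case: (eqVneq y' (lam r + 1)) => [hy'|hy'].
        rewrite [X in (_ <= X)%O]updf_eq hy' eqxx; apply: Hle; lia.
      rewrite !updf_eq (negbTE hy') (_ : (y == lam r + 1) = false); last by apply/eqP; lia.
      move/eqP: hy' => hy'; apply: Er => //; lia.
    rewrite addrow_neq // !updf_neq //; exact: Et.
  + case: (eqVneq t r) => [->|htr].
      exists (lam r + 1); split.
        move=> y hy; exists x; first by rewrite logv_rcons eqxx mem_cat mem_head orbT.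
        by apply: Hle.
      by move=> y /=; rewrite addrow_eq //; lia.
    exists Pt; split.
      move=> y hy /=; rewrite updf_neq //.
      have [v hv hfv] := Bt y hy; exists v => //; exact: mem_logv_rcons.
    move=> y /=; rewrite addrow_neq // updf_neq // Hh; exact: Dt.
-
  set ys := rowys lam mu r.
  set j := find (fun y => (x < f r y)%O) ys.
  set y0 := nth 0 ys j.
  have hhas : has (fun y => (x < f r y)%O) ys.
    have : has (predC (fun y => (f r y <= x)%O)) ys by rewrite has_predC Hall.
    by apply: sub_has => y /=; rewrite ltNge.
  have hj : (j < size ys)%N by rewrite -has_find.
  have Hy0 : y0 \in ys by exact: mem_nth.
  have Hxy0 : (x < f r y0)%O by exact: (nth_find 0 hhas).
  have Hy0r : mu r < y0 <= lam r by rewrite -mem_rowys.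
  have Hleft : forall y, y \in ys -> y < y0 -> (f r y <= x)%O.
    move=> y hy hlt.
    have hi : (index y ys < size ys)%N by rewrite index_mem.
    have := nth_index 0 hy; rewrite nth_rowys // => hye.
    have : (index y ys < j)%N.
      move: hlt; rewrite /y0 nth_rowys // -{1}hye; move: (index y ys) (j) => a b; lia.
    move/(before_find 0); rewrite -/ys -/j (nth_index 0 hy).
    by move/negbT; rewrite -leNgt.
  have HyP : Pr < y0.
    rewrite ltNge; apply/negP => hle.
    have [v hv hfv] := Br y0 (ltac:(lia)).
    have := le_trans hfv (Hlogx v hv).
    by rewrite leNgt Hxy0.
  set u := f r y0.
  set r' := ((r + 1) %% k%:Z)%Z.
  have Hr' : ((sr + 1) %% k%:Z)%Z = r' by rewrite /r' /r modzS_mod.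
  have Hh : forall t, hist k (FMState lam mu (updf f r y0 x) q1 (rcons q2 (u, sr + 1))
                        (rcons lg (r, x))) t =
             hist k (FMState lam mu f ((x, sr) :: q1) q2 lg) t ++
             (if r' == t then [:: u] else [::]).
    move=> t; rewrite /hist /= logv_rcons -cats1 !pendv_cat pendv_cons pendv_cons
      pendv_nil -/r Hr'.
    rewrite pendv_cat; case: (r == t); rewrite ?cats0 -!catA /= ?catA //; by rewrite -!catA.
  move=> t ht; have [Ct Et [Pt [Bt Dt]]] := IH t ht.
  rewrite /= in Et Bt Dt *.
  split.
  + rewrite Hh; case: eqP => [ht'|_]; last by rewrite cats0.
    rewrite pairwise_cat Ct /= andbT.
    apply/allrelP => v w hv; rewrite mem_seq1 => /eqP ->.
    rewrite -ht' in hv.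
    by apply: Dr => //; lia.
  + case: (eqVneq t r) => [->|htr].
      move=> y y' h1 h2 h3; rewrite !updf_eq.
      case: (eqVneq y y0) => [hy|hy]; case: (eqVneq y' y0) => [hy'|hy'] //.
      * apply: le_trans (ltW Hxy0) _; apply: Er; lia.
      * move/eqP: hy => hy.
        by apply: Hleft; [rewrite mem_rowys; lia | lia].
      * by apply: Er.
    move=> y y' h1 h2 h3; rewrite !updf_neq //; exact: Et.
  + case: (eqVneq t r) => [->|htr].
      exists y0; split.
        move=> y hy; exists x; first by rewrite logv_rcons eqxx mem_cat mem_head orbT.
        rewrite updf_eq; case: (eqVneq y y0) => // /eqP hne.
        by apply: Hleft; [rewrite mem_rowys; lia | lia].
      move=> y hy v; rewrite Hh eqxx mem_cat => /orP[hv|].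
        rewrite updf_eq (_ : (y == y0) = false); last by apply/eqP; lia.
        by apply: Dr => //; lia.
      rewrite mem_seq1 => /eqP ->.
      rewrite updf_eq (_ : (y == y0) = false); last by apply/eqP; lia.
      apply: Er; lia.
    exists Pt; split.
      move=> y hy; rewrite updf_neq //.
      have [v hv hfv] := Bt y hy; exists v => //; exact: mem_logv_rcons.
    move=> y hy v; rewrite updf_neq // Hh.
    have -> : (r' == ((t + 1) %% k%:Z)%Z) = false.
      apply/negP => /eqP /(modS_inj _ _ _); rewrite !modz_id // => htr'.
      by move/eqP: htr; rewrite htr'.
    rewrite cats0; exact: Dt.
Qed.

Lemma step_inv k {d} {T : orderType d} (s : fmstate T) :
  (0 < k)%N -> Inv k s -> Inv k (fmstep k s).
Proof.
move=> hk; case: s => lam mu f [|[x sr] q1] q2 lg.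
  exact: step_nil.
exact: step_cons.
Qed.

Lemma iter_inv k {d} {T : orderType d} (s : fmstate T) N :
  (0 < k)%N -> Inv k s -> Inv k (iter N (@fmstep k d T) s).
Proof. by move=> hk H; elim: N => //= N IH; apply: step_inv. Qed.

Lemma pendv_flatten_map k {d} {T : orderType d} (hs : seq int)
  (B : int -> seq (T * int)) t :
  pendv k (flatten [seq B h | h <- hs]) t = flatten [seq pendv k (B h) t | h <- hs].
Proof. by elim: hs => //= h hs IH; rewrite pendv_cat IH. Qed.

Lemma pendv_block k {d} {T : orderType d} (g : int -> T) (s : seq int) c t :
  pendv k [seq (g y, c) | y <- s] t =
  if ((c %% k%:Z)%Z == t) then [seq g y | y <- s] else [::].
Proof.
elim: s => [|y s IH]; first by case: ((c %% k%:Z)%Z == t).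
by rewrite map_cons pendv_cons IH; case: ((c %% k%:Z)%Z == t).
Qed.

Lemma flatten_nil_all {T : Type} (hs : seq int) (g : int -> bool) (F : int -> seq T) :
  (forall h, h \in hs -> g h = false) ->
  flatten [seq if g h then F h else [::] | h <- hs] = [::].
Proof.
elim: hs => //= h hs IH H.
by rewrite H ?mem_head //= IH // => h' hh'; apply: H; rewrite in_cons hh' orbT.
Qed.

Lemma pw_flatten {T : Type} (R : rel T) (hs : seq int) (g : int -> bool)
  (F : int -> seq T) :
  uniq hs -> {in hs &, forall h h', g h -> g h' -> h = h'} ->
  (forall h, h \in hs -> g h -> pairwise R (F h)) ->
  pairwise R (flatten [seq if g h then F h else [::] | h <- hs]).
Proof.
elim: hs => //= h hs IH /andP[hn hu] Hg HF.
case: ifP => gh.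
  rewrite flatten_nil_all ?cats0; first by apply: HF; rewrite ?mem_head.
  move=> h' hh'; apply/negP => gh'.
  have hh2 : h' \in h :: hs by rewrite in_cons hh' orbT.
  have := Hg h h' (mem_head _ _) hh2 gh gh'.
  by move=> eh; move: hn; rewrite eh hh'.
apply: IH => //.
  by move=> a b ha hb; apply: Hg; rewrite in_cons ?ha ?hb orbT.
by move=> a ha; apply: HF; rewrite in_cons ha orbT.
Qed.

Lemma pw_iota_map (c : int) a m (R : rel int) :
  (forall i j, (a <= i)%N -> (i < j)%N -> (j < a + m)%N ->
     R (c + (i.+1)%:Z) (c + (j.+1)%:Z)) ->
  pairwise R [seq c + (i.+1)%:Z | i <- iota a m].
Proof.
elim: m a => // m IH a H /=.
apply/andP; split.
  apply/allP => y /mapP [j hj ->]; rewrite mem_iota in hj.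
  apply: H; lia.
apply: IH => i j h1 h2 h3; apply: H; lia.
Qed.

Lemma pw_rowys (L M : int -> int) s (R : rel int) :
  (forall y y', M s < y -> y < y' -> y' <= L s -> R y y') ->
  pairwise R (rowys L M s).
Proof.
move=> H; rewrite /rowys; case: ifP => // hlt.
apply: pw_iota_map => i j h1 h2 h3; apply: H; lia.
Qed.

Lemma row_mono n k {d} {T : orderType d} (lam mu : int -> int) (f : int -> int -> T) t :
  semistandard n k lam mu f -> 0 <= t < k%:Z ->
  forall y y', mu t < y -> y <= y' -> y' <= lam t -> (f t y <= f t y')%O.
Proof.
move=> [Hr _] ht y y' h1 h2 h3.
have Hc : forall z, canon n k t z = (t, z).
  by move=> z; rewrite /canon modz_small // divz_small // mul0r addr0.
have -> : y' = y + `|(y' - y)%R|%N%:Z by lia.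
have : y + `|(y' - y)%R|%N%:Z <= lam t by lia.
elim: `|(y' - y)%R|%N => [|m IH] hm; first by rewrite addr0.
apply: le_trans (IH ltac:(lia)) _.
have := Hr t (y + m%:Z); rewrite !Hc /= => H.
have -> : y + m.+1%:Z = y + m%:Z + 1 by lia.
by apply: H; lia.
Qed.

Lemma init_inv n k {d} {T : orderType d} (lam mu nu : int -> int)
  (f : int -> int -> T) r0 :
  (0 < k)%N -> subpart mu nu -> semistandard n k lam mu f ->
  Inv k (@fminit k d T lam mu nu f r0).
Proof.
move=> hk hmn hss t ht.
set hs := [seq r0 + i%:Z | i <- iota 0 k].
set mn := fun m => Num.min (lam m) (nu m).
have Hh : forall t', hist k (@fminit k d T lam mu nu f r0) t' =
  flatten [seq (if ((h + 1) %% k%:Z)%Z == t' then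
                  [seq f (h %% k%:Z)%Z y | y <- rowys mn mu (h %% k%:Z)%Z] else [::])
          | h <- hs].
  move=> t'; rewrite /hist /= cats0 pendv_flatten_map.
  by congr flatten; apply: eq_map => h; rewrite pendv_block.
have Hmono := fun t0 => @row_mono n k d T lam mu f t0 hss.
have Hmem : forall s y, y \in rowys mn mu s -> mu s < y /\ y <= lam s /\ y <= nu s.
  move=> s y; rewrite mem_rowys /mn le_min => /andP[-> /andP[-> ->]]; done.
split.
- rewrite Hh; apply: pw_flatten.
  + rewrite map_inj_uniq ?iota_uniq // => i j H; lia.
  + move=> h h' /mapP [i hi ->] /mapP [j hj ->] /eqP gi /eqP gj.
    rewrite mem_iota in hi; rewrite mem_iota in hj.
    have := mod_shift_inj k i j r0 ltac:(lia) ltac:(lia) (etrans gi (esym gj)).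
    by move=> ->.
  + move=> h hh gh; rewrite pairwise_map.
    apply: pw_rowys => y y' h1 h2 h3.
    apply: Hmono; [exact: modz_range | lia | lia | ].
    move: h3; rewrite /mn le_min => /andP[]; done.
- move=> y y' /= h1 h2; rewrite le_max => /orP[] h3; last by lia.
  apply: (Hmono t ht) => //; have := hmn t; lia.
- exists (nu t); split.
    by move=> y /= hy; lia.
  move=> y /= hy v; rewrite Hh => /flattenP [l /mapP [h hh ->]].
  case: eqP => // /modS_inj; rewrite (modz_small (m := t)) // => eh.
  rewrite eh => /mapP [y'' hy'' ->].
  have [h1 [h2 h3]] := Hmem _ _ hy''.
  move: hy; rewrite le_max => /andP[h4 /orP[] h5]; last by lia.
  apply: (Hmono t ht) => //; lia.
Qed.

Theorem mainTheorem14 (n k : nat) (hk : (0 < k)%N) (hkn : (k < n)%N)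
  d (T : orderType d) (lam mu nu : int -> int) (f : int -> int -> T) (r0 : int) :
  cylindric n k lam -> cylindric n k mu -> subpart mu lam ->
  semistandard n k lam mu f ->
  cylindric n k nu -> subpart mu nu ->
  (forall b1 b2, isBox k b1 -> isBox k b2 -> inSkew nu mu b1 -> inSkew nu mu b2 ->
     b1 <> b2 -> ~ sameColumn n k b1 b2) ->
  forall (N : nat) (r : int),
    sorted (<=%O) (@insertedRow k d T lam mu nu f r0 N r).
Proof.
move=> _ _ _ hss _ hmn _ N r.
have Hinv := @iter_inv k d T _ N hk (@init_inv n k d T lam mu nu f r0 hk hmn hss).
have [C _ _] := Hinv _ (modz_range k r hk).
apply: pairwise_sorted.
move: C; rewrite /hist pairwise_cat => /and3P[_ H _].
exact: H.
Qed.
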